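(* Let $f\colon V_0\to\mathbb{R}$ be continuous such that $\Gamma_f$ is a ruled surface, let $\sigma_+(z)=\max\{m:L_{Z^z,m}\subset\Gamma_f\}$, and let $m_\infty=\lim_{t\to\infty}\sigma_+(t)$ and $m_{-\infty}=\lim_{t\to-\infty}\sigma_+(t)$ (limits in $[-\infty,\infty]$). For $t>0$ let $f_t(p)=t^{-1}f(s_{t,t}(p))$, so that $\Gamma_{f_t}=s_{t,t}^{-1}(\Gamma_f)$. For $x\neq0$ define $$F(x,0,z)=\begin{cases} m_{-\infty}x & \text{if } m_{-\infty}<\infty \text{ and } z\le-\frac{m_{-\infty}}2x^2,\\ -\frac{2z}{x} & \text{if } -\frac{m_{-\infty}}2x^2<z<-\frac{m_\infty}2x^2,\\ m_\infty x & \text{if } m_\infty>-\infty \text{ and } z\ge-\frac{m_\infty}2x^2.\end{cases}$$ Then $f_t\to F$ pointwise almost everywhere on $V_0$ as $t\to\infty$.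
   Context: $\mathbb{H}$ is $\mathbb{R}^3$ with product $(x,y,z)\cdot(x',y',z')=(x+x',y+y',z+z'+\frac{xy'-yx'}{2})$; $X=(1,0,0)$, $Y=(0,1,0)$, $Z=(0,0,1)$, $v^t=tv$. A horizontal line is $\{p\cdot tv\}$ with $v=(a,b,0)\neq0$; $L_{p,m}=\{p\cdot(X+mY)^t:t\in\mathbb{R}\}$. A ruled surface is a union of horizontal line segments (rulings) with endpoints in its boundary. $V_0=\{(x,0,z)\}$ with Lebesgue measure, $\Gamma_f=\{u\cdot Y^{f(u)}:u\in V_0\}$, $s_{t,t}(x,y,z)=(tx,ty,t^2z)$. (The function $\sigma_+$ is well defined and nonincreasing, so the limits exist.) *)

(* Defs.v *)
From HB Require Import structures.
From mathcomp Require Import all_boot all_order all_algebra.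
From mathcomp Require Import all_classical all_reals all_analysis.
Set Implicit Arguments. Unset Strict Implicit. Unset Printing Implicit Defensive.
Import Order.TTheory GRing.Theory Num.Theory.
Import numFieldNormedType.Exports.
Local Open Scope classical_set_scope.
Local Open Scope ring_scope.

Section Heis.
Variable R : realType.

(* Points of the Heisenberg group H = R^3, written ((x, y), z). *)
Definition hmul (p q : R * R * R) : R * R * R :=
  (p.1.1 + q.1.1, p.1.2 + q.1.2,
   p.2 + q.2 + (p.1.1 * q.1.2 - p.1.2 * q.1.1) / 2).

Definition hline (p : R * R * R) (a b : R) : set (R * R * R) :=
  [set hmul p (t * a, t * b, 0) | t in [set: R]].

Definition Lline (p : R * R * R) (m : R) := hline p 1 m.

(* V_0 = {(x,0,z)} is identified with R * R via (x, z).
   Gamma_f = { u . Y^{f(u)} : u in V_0 } *)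
Definition Gamma (f : R * R -> R) : set (R * R * R) :=
  [set hmul (u.1, 0, u.2) (0, f u, 0) | u in [set: R * R]].

(* A surface without boundary (such as Gamma_f, f continuous) is ruled iff
   every point lies on a full horizontal line contained in the surface. *)
Definition ruled (S : set (R * R * R)) : Prop :=
  forall q, S q -> exists a b : R, (a, b) != (0, 0) /\ hline q a b `<=` S.

(* sigma_+(z) = max { m : L_{Z^z, m} in Gamma_f } (taken as a sup in \bar R;
   it is a max under the hypothesis of the theorem) *)
Definition sigma_plus (f : R * R -> R) (z : R) : \bar R :=
  ereal_sup [set m%:E | m in [set m : R | Lline (0, 0, z) m `<=` Gamma f]].

Definition m_pinfty (f : R * R -> R) : \bar R :=
  lim (sigma_plus f x @[x --> +oo]).
Definition m_ninfty (f : R * R -> R) : \bar R :=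
  lim (sigma_plus f x @[x --> -oo]).

(* f_t(p) = t^{-1} f(s_{t,t}(p)), s_{t,t}(x,0,z) = (t x, 0, t^2 z) *)
Definition f_resc (f : R * R -> R) (t : R) (p : R * R) : R :=
  t^-1 * f (t * p.1, t ^+ 2 * p.2).

(* The limit function F(x,0,z), meaningful for x <> 0. *)
Definition Flim (mp mn : \bar R) (p : R * R) : R :=
  let x := p.1 in let z := p.2 in
  if ((mn < +oo)%E && (z%:E <= - mn * (x ^+ 2 / 2)%:E)%E) then fine mn * x
  else if ((mp > -oo)%E && (z%:E >= - mp * (x ^+ 2 / 2)%:E)%E) then fine mp * x
  else - (2 * z) / x.

End Heis.

(* Main.v *)
Require Import Defs.
From HB Require Import structures.
From mathcomp Require Import all_boot all_order all_algebra.
From mathcomp Require Import all_classical all_reals all_analysis.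
From mathcomp Require Import ring lra.
Import Order.TTheory GRing.Theory Num.Theory.
Import numFieldNormedType.Exports.
Local Open Scope classical_set_scope.
Local Open Scope ring_scope.

Definition Sf {R : realType} (f : R * R -> R) (z m : R) : Prop :=
  forall s, f (s, z - s ^+ 2 * m / 2) = s * m.

Lemma LlineE (R : realType) (f : R * R -> R) z m :
  Lline (0, 0, z) m `<=` Gamma f <-> Sf f z m.
Proof.
split.
- move=> H s.
  have hp : Lline (0, 0, z) m (hmul (0, 0, z) (s * 1, s * m, 0)) by exists s.
  have [[u1 u2] _ hu] := H _ hp.
  move: hu; rewrite /hmul /= => -[h1 h2 h3].
  have e1 : u1 = s by move: h1; rewrite addr0 add0r mulr1.
  have e2 : f (u1, u2) = s * m by move: h2; rewrite !add0r.
  rewrite e2 e1 in h3.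
  have -> : z - s ^+ 2 * m / 2 = u2.
    have h3' : z = u2 + s * (s * m) / 2.
      transitivity (z + 0 + (0 * (s * m) - 0 * (s * 1)) / 2); first ring.
      rewrite -h3; ring.
    rewrite h3'; ring.
  by rewrite -e2 e1.
- move=> H q [s _ <-]; exists (s, z - s ^+ 2 * m / 2) => //.
  rewrite /hmul /= H; f_equal; [f_equal|]; ring.
Qed.

Lemma Sf_axis (R : realType) (f : R * R -> R) z m : Sf f z m -> f (0, z) = 0.
Proof. by move=> H; have := H 0; rewrite expr0n /= !mul0r subr0. Qed.

Lemma Sf_nocross (R : realType) (f : R * R -> R) z1 z2 m1 m2 :
  Sf f z1 m1 -> Sf f z2 m2 -> z1 < z2 -> m2 <= m1.
Proof.
move=> H1 H2 hz; rewrite leNgt; apply/negP => hm.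
set s := Num.sqrt (2 * (z2 - z1) / (m2 - m1)).
have hpos : 0 < 2 * (z2 - z1) / (m2 - m1).
  apply: divr_gt0; last by rewrite subr_gt0.
  by apply: mulr_gt0 => //; rewrite subr_gt0.
have hs2 : s ^+ 2 = 2 * (z2 - z1) / (m2 - m1) by rewrite sqr_sqrtr // ltW.
have hs : 0 < s by rewrite sqrtr_gt0.
have hne : m2 - m1 != 0 by rewrite subr_eq0 gt_eqF.
have e : z1 - s ^+ 2 * m1 / 2 = z2 - s ^+ 2 * m2 / 2.
  rewrite hs2; field; exact: hne.
have := H1 s; rewrite e H2 => /(mulfI (lt0r_neq0 hs)) em.
by move: hm; rewrite em ltxx.
Qed.

Lemma ruling_axis (R : realType) (f : R * R -> R) :
  ruled (Gamma f) -> (forall z, f (0, z) = 0) ->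
  forall X Z : R, X != 0 -> exists z0 m, Sf f z0 m /\ f (X, Z) = X * m /\
     z0 = Z + X ^+ 2 * m / 2.
Proof.
move=> hr h0 X Z hX.
set w := f (X, Z).
have hq : Gamma f (hmul (X, 0, Z) (0, w, 0)) by exists (X, Z).
have [a [b [hab hsub]]] := hr _ hq.
have hgen : forall s, f (X + s * a, Z + X * w / 2 + (X * (s * b) - w * (s * a)) / 2
                      - (X + s * a) * (w + s * b) / 2) = w + s * b.
  move=> s.
  have hp : hline (hmul (X, 0, Z) (0, w, 0)) a b
      (hmul (hmul (X, 0, Z) (0, w, 0)) (s * a, s * b, 0)) by exists s.
  have [[u1 u2] _ hu] := hsub _ hp.
  move: hu; rewrite /hmul /= => -[h1 h2 h3].
  have e1 : u1 = X + s * a by move: h1; rewrite !addr0.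
  have e2 : f (u1, u2) = w + s * b by move: h2; rewrite !add0r.
  rewrite e2 e1 in h3.
  have -> : Z + X * w / 2 + (X * (s * b) - w * (s * a)) / 2
      - (X + s * a) * (w + s * b) / 2 = u2.
    have h3' : u2 = Z + 0 + (X * w - 0 * 0) / 2 + 0 + ((X + 0) * (s * b) - (0 + w) * (s * a)) / 2
       - (X + s * a) * (w + s * b) / 2.
      rewrite -h3; ring.
    rewrite h3'; ring.
  by rewrite -e2 e1.
have [a0|an0] := eqVneq a 0.
  have hb : b != 0 by move: hab; rewrite a0 xpair_eqE eqxx.
  have := hgen 1; rewrite a0 !mulr0 addr0 !mul1r subr0.
  have -> : Z + X * w / 2 + X * b / 2 - X * (w + b) / 2 = Z by ring.
  rewrite -/w => e; have b0 : b = 0 by lra.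
  by move: hb; rewrite b0 eqxx.
set m := b / a.
have hw : w = X * m.
  have := hgen (- X / a).
  have -> : X + - X / a * a = 0 by field.
  rewrite h0 => /eqP; rewrite eq_sym -subr_eq0 => /eqP e.
  rewrite /m; apply/eqP; rewrite -subr_eq0; apply/eqP.
  rewrite -[RHS]e; field; exact: an0.
exists (Z + X ^+ 2 * m / 2), m; split; last by split.
move=> s'.
have := hgen ((s' - X) / a).
have -> : X + (s' - X) / a * a = s' by field.
have -> : Z + X * w / 2 + (X * ((s' - X) / a * b) - w * ((s' - X) / a * a)) / 2 -
    s' * (w + (s' - X) / a * b) / 2 = Z + X ^+ 2 * m / 2 - s' ^+ 2 * m / 2.
  rewrite hw /m; field; exact: an0.
move=> ->; rewrite hw /m; field; exact: an0.
Qed.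

Lemma sigma_props (R : realType) (f : R * R -> R)
  (hmax : forall z : R, exists m : R, Lline (0, 0, z) m `<=` Gamma f /\
            (forall m' : R, Lline (0, 0, z) m' `<=` Gamma f -> m' <= m)) :
 [/\ (forall z m, Sf f z m -> (m%:E <= m_ninfty f)%E),
     (forall z m, Sf f z m -> (m_pinfty f <= m%:E)%E),
     (forall a, (m_pinfty f < a%:E)%E -> exists Z, forall z m, Z <= z -> Sf f z m -> m < a) &
     (forall a, (a%:E < m_ninfty f)%E -> exists Z, forall z m, z <= Z -> Sf f z m -> a < m)].
Proof.
have [sm hsm] := choice hmax.
have hS z : Sf f z (sm z) := (@LlineE R f z _).1 (hsm z).1.
have hle z m : Sf f z m -> m <= sm z := fun H => (hsm z).2 m ((@LlineE R f z m).2 H).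
have hsig z : sigma_plus f z = (sm z)%:E.
  rewrite /sigma_plus; apply/eqP; rewrite eq_le; apply/andP; split.
  - apply: ge_ereal_sup => _ [m Hm <-]; rewrite lee_fin; exact: (hsm z).2.
  - apply: ereal_sup_ubound; exists (sm z) => //; exact: (hsm z).1.
have hmono z1 z2 : z1 <= z2 -> sm z2 <= sm z1.
  rewrite le_eqVlt => /orP[/eqP -> //|h]; exact: Sf_nocross (hS z1) (hS z2) h.
have hmp : m_pinfty f = ereal_inf (range (sigma_plus f)).
  rewrite /m_pinfty; apply: cvg_lim => //; apply: nonincreasing_cvge => x y hxy.
  by rewrite !hsig lee_fin; exact: hmono.
have hmn : m_ninfty f = ereal_sup (range (sigma_plus f \o -%R)).
  rewrite /m_ninfty; apply: cvg_lim => //; apply/cvgNy_compNP.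
  apply: nondecreasing_cvge => x y hxy /=; rewrite !hsig lee_fin; apply: hmono.
  by rewrite lerN2.
split.
- move=> z m H; rewrite hmn; apply: (@le_trans _ _ (sm z)%:E).
    by rewrite lee_fin; exact: hle.
  by apply: ereal_sup_ubound; exists (-z) => //=; rewrite opprK hsig.
- move=> z m H; rewrite hmp; apply: (@le_trans _ _ (sm (z + 1))%:E).
    by apply: ereal_inf_lbound; exists (z + 1).
  rewrite lee_fin; apply: Sf_nocross H (hS (z + 1)) _; lra.
- move=> a; rewrite hmp => /ereal_inf_lt [_ [z1 _ <-]]; rewrite hsig lte_fin => h1.
  exists z1 => z m hz H; apply: le_lt_trans (hle _ _ H) _.
  exact: le_lt_trans (hmono _ _ hz) h1.
- move=> a; rewrite hmn => /ereal_sup_gt [_ [r _ <-]]; rewrite /= hsig lte_fin => h1.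
  exists (- r - 1) => z m hz H; apply: lt_le_trans h1 _.
  apply: Sf_nocross H (hS (- r)) _; lra.
Qed.

Lemma near_big {R : realType} (Z : R) {k : R} : 0 < k ->
  \forall t \near +oo, 0 < t /\ Z <= t ^+ 2 * k.
Proof.
move=> hk; exists (Num.max 1 (Z / k)); split; first exact: num_real.
move=> t; rewrite gt_max => /andP[h1 h2]; split; first lra.
have hZ : Z < t * k by rewrite -ltr_pdivrMr.
rewrite expr2 -mulrA; apply: le_trans (ltW hZ) _; apply: ler_peMl; last lra.
by apply: mulr_ge0; lra.
Qed.

Lemma core (R : realType) (P : R -> R -> Prop) (mp mn : \bar R) (x z : R)
  (mt : R -> R)
  (P1 : forall z m, P z m -> (m%:E <= mn)%E)
  (P2 : forall z m, P z m -> (mp <= m%:E)%E)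
  (P3 : forall a, (mp < a%:E)%E -> exists Z, forall z m, Z <= z -> P z m -> m < a)
  (P4 : forall a, (a%:E < mn)%E -> exists Z, forall z m, z <= Z -> P z m -> a < m)
  (hx : x != 0)
  (K : forall t, 0 < t -> P (t ^+ 2 * (z + mt t * x ^+ 2 / 2)) (mt t)) :
  mt t @[t --> +oo] --> Flim mp mn (x, z) / x.
Proof.
set c := - (2 * z) / x / x.
have hx2 : 0 < x ^+ 2 by rewrite exprn_even_gt0 //=.
have hc2 : c * x ^+ 2 = - (2 * z) by rewrite /c; field.
have ez t : z + mt t * x ^+ 2 / 2 = x ^+ 2 / 2 * (mt t - c) by rewrite /c; field.
have hpos : \forall t \near +oo, 0 < (t : R).
  by apply: (filterS _ (near_big 0 ltr01)) => t [].
have hU a d : 0 < d -> (mp < a%:E)%E -> c + d <= a -> \forall t \near +oo, mt t < a.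
  move=> hd hmpa hca; have [Z hZ] := P3 a hmpa.
  have hk : 0 < x ^+ 2 / 2 * d by apply: mulr_gt0 => //; apply: divr_gt0.
  apply: (filterS _ (near_big Z hk)) => t [ht hZt].
  rewrite ltNge; apply/negP => hm.
  have : Z <= t ^+ 2 * (z + mt t * x ^+ 2 / 2).
    apply: le_trans hZt _; rewrite ez; apply: ler_wpM2l; first exact: sqr_ge0.
    apply: ler_wpM2l; first by apply: divr_ge0 => //; exact: ltW.
    lra.
  move=> /hZ /(_ (K t ht)); lra.
have hL a d : 0 < d -> (a%:E < mn)%E -> a <= c - d -> \forall t \near +oo, a < mt t.
  move=> hd hamn hca; have [Z hZ] := P4 a hamn.
  have hk : 0 < x ^+ 2 / 2 * d by apply: mulr_gt0 => //; apply: divr_gt0.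
  apply: (filterS _ (near_big (- Z) hk)) => t [ht hZt].
  rewrite ltNge; apply/negP => hm.
  have : t ^+ 2 * (z + mt t * x ^+ 2 / 2) <= Z.
    rewrite ez.
    have : x ^+ 2 / 2 * (mt t - c) <= x ^+ 2 / 2 * (- d).
      apply: ler_wpM2l; first by apply: divr_ge0 => //; exact: ltW.
      lra.
    move=> h; have := ler_wpM2l (sqr_ge0 t) h; lra.
  move=> /hZ /(_ (K t ht)); lra.
have hmnf : (-oo < mn)%E.
  by apply: lt_le_trans (P1 _ _ (K 1 ltr01)); exact: ltNyr.
have hmpf : (mp < +oo)%E.
  exact: (le_lt_trans (P2 _ _ (K 1 ltr01)) (ltry _)).
rewrite /Flim /=; case: ifP => [/andP[hn hz]|hA].
  have [M eM] : exists M, mn = M%:E.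
    by move: hn hmnf; case: (mn) => [r _ _|//|//]; exists r.
  rewrite eM /= mulfK //.
  rewrite eM -EFinN -EFinM lee_fin in hz.
  have hcM : M <= c by nra.
  apply/cvgrPdist_lt => e he.
  have L := hL (M - e) e he ltac:(by rewrite eM lte_fin; lra) ltac:(by lra).
  apply: filterS2 L hpos => t h1 ht.
  have := P1 _ _ (K t ht); rewrite eM lee_fin => h2.
  rewrite ltr_norml; apply/andP; split; lra.
case: ifP => [/andP[hp hz]|hB].
  have [M eM] : exists M, mp = M%:E.
    by move: hp hmpf; case: (mp) => [r _ _|//|//]; exists r.
  rewrite eM /= mulfK //.
  rewrite eM -EFinN -EFinM lee_fin in hz.
  have hcM : c <= M by nra.
  apply/cvgrPdist_lt => e he.
  have L := hU (M + e) e he ltac:(by rewrite eM lte_fin; lra) ltac:(by lra).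
  apply: filterS2 L hpos => t h1 ht.
  have := P2 _ _ (K t ht); rewrite eM lee_fin => h2.
  rewrite ltr_norml; apply/andP; split; lra.
have hcn : (c%:E < mn)%E.
  move: hA hmnf; case: (mn) => [M|_ _|//]; last exact: ltry.
  rewrite ltry /= -EFinM lee_fin lte_fin => /negbT; rewrite -ltNge => h _.
  nra.
have hpc : (mp < c%:E)%E.
  move: hB hmpf; case: (mp) => [M|//|_ _]; last exact: ltNyr.
  rewrite ltNyr /= -EFinM lee_fin lte_fin => /negbT; rewrite -ltNge => h _.
  nra.
rewrite -/c; apply/cvgrPdist_lt => e he.
have hce : (mp < (c + e)%:E)%E by apply: lt_trans hpc _; rewrite lte_fin; lra.
have hce' : ((c - e)%:E < mn)%E by apply: lt_trans _ hcn; rewrite lte_fin; lra.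
have U := hU (c + e) e he hce ltac:(by lra).
have L := hL (c - e) e he hce' ltac:(by lra).
apply: filterS2 U L => t h1 h2.
rewrite ltr_norml; apply/andP; split; lra.
Qed.

Lemma main_pt (R : realType) (f : R * R -> R)
  (hf : continuous f)
  (hruled : ruled (Gamma f))
  (hmax : forall z : R, exists m : R, Lline (0, 0, z) m `<=` Gamma f /\
            (forall m' : R, Lline (0, 0, z) m' `<=` Gamma f -> m' <= m)) :
  forall p : R * R, p.1 != 0 ->
      f_resc f t p @[t --> +oo] --> Flim (m_pinfty f) (m_ninfty f) p.
Proof.
have h0 : forall z, f (0, z) = 0.
  by move=> z; have [m [hm _]] := hmax z; exact: Sf_axis ((@LlineE R f z m).1 hm).
have [P1 P2 P3 P4] := @sigma_props R f hmax.
move=> [x z] /= hx.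
pose mt := fun t => f_resc f t (x, z) / x.
have K : forall t, 0 < t -> Sf f (t ^+ 2 * (z + mt t * x ^+ 2 / 2)) (mt t).
  move=> t ht; have htx : t * x != 0 by rewrite mulf_neq0 // lt0r_neq0.
  have [z0 [m [hS [hfm hz0]]]] := @ruling_axis R f hruled h0 (t * x) (t ^+ 2 * z) htx.
  have emt : mt t = m.
    rewrite /mt /f_resc /= hfm; field.
    by rewrite hx lt0r_neq0.
  rewrite emt (_ : t ^+ 2 * (z + m * x ^+ 2 / 2) = z0) //; rewrite hz0; ring.
have hcv := @core R _ _ _ _ _ mt P1 P2 P3 P4 hx K.
have E : (fun t => x * mt t) =1 (fun t => f_resc f t (x, z)).
  by move=> t; rewrite /mt mulrC divfK.
rewrite (_ : Flim (m_pinfty f) (m_ninfty f) (x, z) =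
   x * (Flim (m_pinfty f) (m_ninfty f) (x, z) / x)); last by rewrite mulrC divfK.
rewrite -(eq_cvg _ _ E); exact: cvgMl_tmp.
Qed.

Theorem lemma4p5 (R : realType) (f : R * R -> R)
  (hf : continuous f)
  (hruled : ruled (Gamma f))
  (hmax : forall z : R, exists m : R, Lline (0, 0, z) m `<=` Gamma f /\
            (forall m' : R, Lline (0, 0, z) m' `<=` Gamma f -> m' <= m)) :
  {ae ((@lebesgue_measure R) \x (@lebesgue_measure R))%E,
    forall p : R * R, p.1 != 0 ->
      f_resc f t p @[t --> +oo] --> Flim (m_pinfty f) (m_ninfty f) p}.
Proof.
by apply: aeW => p; exact: (@main_pt R f hf hruled hmax p).
Qed.
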